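(* Let $P$ be a finite poset, let $P'$ be a barycentric subdivision of $P$, and let $a,b,c,d\in P'$. If $a<c$, $b<d$, $(b,c)\in\mathrm{Diag}(P')$ and $(a,b),(d,c)\in\mathrm{Inc}(P')$, then $b,c\in P$. If, moreover, $(a,c),(b,d)\in\mathrm{Diag}(P')$ and $a<d$, then $a,d\in P$.
   Context: For a poset $Q$, $x\prec y$ means $x<y$ with no $z$ satisfying $x<z<y$; $\mathrm{Diag}(Q)$ is the set of such covering pairs $(x,y)$, and $\mathrm{Inc}(Q)$ is the set of pairs of incomparable elements. A barycentric subdivision $P'$ of (the diagram of) $P$ is obtained by adding finitely many (possibly zero) new vertices on each edge $(x,y)$ of $\mathrm{Diag}(P)$, the added vertices on an edge forming a chain strictly between $x$ and $y$; $P'$ carries the induced order and contains $P$ as a subposet. Each added vertex has a unique upper cover and a unique lower cover in $P'$. *)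

(* Defs.v *)
From mathcomp Require Import all_boot all_order.
Set Implicit Arguments. Unset Strict Implicit. Unset Printing Implicit Defensive.
Import Order.TTheory.
Local Open Scope order_scope.

Definition covers (d : Order.disp_t) (T : finPOrderType d) (x y : T) : bool :=
  (x < y) && ~~ [exists z : T, (x < z) && (z < y)].

(* Points of a barycentric subdivision of P = T:
   V x   : an original element x of P;
   E x y i : the i-th added vertex (counted from the bottom, i = 0..k x y - 1)
             on the covering edge (x,y) of Diag(P). *)
Inductive spt (T : Type) := V of T | E of T & T & nat.
Arguments V {T}. Arguments E {T}.

Definition is_vertex T (p : spt T) : bool := if p is V _ then true else false.

Section Subdiv.
Context (d : Order.disp_t) (T : finPOrderType d) (k : T -> T -> nat).

(* k x y = number of vertices added on edge (x,y) (only relevant when x ≺ y). *)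
Definition svalid (p : spt T) : bool :=
  match p with V _ => true | E x y i => covers x y && (i < k x y)%N end.

(* The order of P': reachability in the subdivided diagram
   (chain x < E x y 0 < ... < E x y (k-1) < y on each edge). *)
Definition sle (p q : spt T) : bool :=
  match p, q with
  | V x, V y => x <= y
  | V z, E x _ _ => z <= x
  | E _ y _, V z => y <= z
  | E x y i, E x' y' j => ((x == x') && (y == y') && (i <= j)%N) || (y <= x')
  end.

Definition subdiv := {p : spt T | svalid p}.

Definition sle' (p q : subdiv) : bool := sle (val p) (val q).
Definition slt' (p q : subdiv) : Prop := sle' p q /\ p <> q.
Definition sdiag (p q : subdiv) : Prop :=
  slt' p q /\ ~ (exists z : subdiv, slt' p z /\ slt' z q).
Definition sinc (p q : subdiv) : Prop := ~~ sle' p q /\ ~~ sle' q p.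
Definition inP (p : subdiv) : bool := is_vertex (val p).
End Subdiv.

(* Main.v *)
Require Import Defs.
From Stdlib Require Import Classical Lia.
From mathcomp Require Import all_boot all_order.
Import Order.TTheory.
Local Open Scope order_scope.

Section L.
Context (disp : Order.disp_t) (T : finPOrderType disp) (k : T -> T -> nat).

Lemma gen1 (p q s : subdiv k) : slt' p s -> (forall z, slt' p z -> sle' s z) ->
  sdiag p q -> forall z, slt' p z -> sle' q z.
Proof.
move=> Hps A [Hpq Hnz] z Hz.
case: (classic (s = q)) => [<-|Hsq']; first exact: A.
by exfalso; apply: Hnz; exists s; split => //; split => //; apply: A.
Qed.

Lemma gen2 (p q s : subdiv k) : slt' s q -> (forall z, slt' z q -> sle' z s) ->
  sdiag p q -> forall z, slt' z q -> sle' z p.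
Proof.
move=> Hsq A [Hpq Hnz] z Hz.
case: (classic (p = s)) => [->|Hsq']; first exact: A.
by exfalso; apply: Hnz; exists s; split => //; split => //; apply: A.
Qed.

Lemma L1 (p q z : subdiv k) : ~~ inP p -> sdiag p q -> slt' p z -> sle' q z.
Proof.
case: p => [[w|x y i] Hp] //= _ Hd Hz0.
have /andP [Hc Hi] : covers x y && (i < k x y)%N := Hp.
case Hk: (i.+1 < k x y)%N.
- have Hs : svalid k (E x y i.+1) by rewrite /= Hc Hk.
  refine (gen1 _ _ (exist (fun p => svalid k p) _ Hs) _ _ Hd _ Hz0).
    split; first by rewrite /sle' /= !eqxx leqnSn.
    by move=> /(congr1 val) /= H; inversion H; lia.
  move=> [[w|x' y' j] Hz] [Hle Hn]; rewrite /sle' /= in Hle *; first by [].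
  move: Hle => /orP [/andP [/andP [/eqP ex /eqP ey] Hij]|Hy].
    subst x' y'.
    have Hij' : (i < j)%N.
      rewrite ltn_neqAle Hij andbT; apply/negP => /eqP eij; subst j.
      by apply: Hn; congr exist; apply: bool_irrelevance.
    by rewrite !eqxx Hij'.
  by rewrite Hy orbT.
- have Hs : svalid k (@V T y) by [].
  refine (gen1 _ _ (exist (fun p => svalid k p) _ Hs) _ _ Hd _ Hz0).
    split; first by rewrite /sle' /=.
    by move=> /(congr1 val) /= H; inversion H; lia.
  move=> [[w|x' y' j] Hz] [Hle Hn]; rewrite /sle' /= in Hle *; first by [].
  move: Hle => /orP [/andP [/andP [/eqP ex /eqP ey] Hij]|Hy] //.
  subst x' y'.
  have Hij' : (i < j)%N.
    rewrite ltn_neqAle Hij andbT; apply/negP => /eqP eij; subst j.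
    by apply: Hn; congr exist; apply: bool_irrelevance.
  have /andP [_ Hj] := Hz.
  by move: Hk; rewrite (leq_ltn_trans Hij' Hj).
Qed.

Lemma L2 (p q z : subdiv k) : ~~ inP q -> sdiag p q -> slt' z q -> sle' z p.
Proof.
case: q => [[w|x y j] Hq] //= _ Hd Hz0.
have /andP [Hc Hj] : covers x y && (j < k x y)%N := Hq.
case: j Hq Hj Hd Hz0 => [|j] Hq Hj Hd Hz0.
- have Hs : svalid k (@V T x) by [].
  refine (gen2 _ _ (exist (fun p => svalid k p) _ Hs) _ _ Hd _ Hz0).
    split; first by rewrite /sle' /=.
    by move=> /(congr1 val) /= H; inversion H; lia.
  move=> [[w|x' y' i] Hz] [Hle Hn]; rewrite /sle' /= in Hle *; first by [].
  move: Hle => /orP [/andP [/andP [/eqP ex /eqP ey] Hij]|Hy] //.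
  subst x' y'; move: Hij; rewrite leqn0 => /eqP ei; subst i.
  by exfalso; apply: Hn; congr exist; apply: bool_irrelevance.
- have Hs : svalid k (E x y j) by rewrite /= Hc (ltnW Hj).
  refine (gen2 _ _ (exist (fun p => svalid k p) _ Hs) _ _ Hd _ Hz0).
    split; first by rewrite /sle' /= !eqxx leqnSn.
    by move=> /(congr1 val) /= H; inversion H; lia.
  move=> [[w|x' y' i] Hz] [Hle Hn]; rewrite /sle' /= in Hle *; first by [].
  move: Hle => /orP [/andP [/andP [/eqP ex /eqP ey] Hij]|Hy].
    subst x' y'.
    have Hij' : (i < j.+1)%N.
      rewrite ltn_neqAle Hij andbT; apply/negP => /eqP eij; subst i.
      by apply: Hn; congr exist; apply: bool_irrelevance.
    by rewrite !eqxx -ltnS Hij'.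
  by rewrite Hy orbT.
Qed.
End L.

Theorem lemma1 (disp : Order.disp_t) (T : finPOrderType disp) (k : T -> T -> nat)
  (a b c d : subdiv k) :
  slt' a c -> slt' b d -> sdiag b c -> sinc a b -> sinc d c ->
  (inP b /\ inP c) /\
  (sdiag a c -> sdiag b d -> slt' a d -> inP a /\ inP d).
Proof.
move=> Hac Hbd Hbc [Hab1 Hab2] [Hdc1 Hdc2]; split.
  split; apply/negPn/negP => H.
    by move: Hdc2; rewrite (L1 _ _ _ _ _ _ H Hbc Hbd).
  by move: Hab1; rewrite (L2 _ _ _ _ _ _ H Hbc Hac).
move=> Hac' Hbd' Had; split; apply/negPn/negP => H.
  by move: Hdc2; rewrite (L1 _ _ _ _ _ _ H Hac' Had).
by move: Hab1; rewrite (L2 _ _ _ _ _ _ H Hbd' Had).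
Qed.
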